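(* Let $\mathcal P\subset\mathbb R^n$ be an $n$-dimensional convex polytope and consider $\dot x=Ax+a+Bu$, $x\in\mathcal P$, with $\operatorname{rank}(B)=n-1$, $(A,B)$ controllable and $\operatorname{int}\mathcal P\cap\mathcal O=\emptyset$. Let $y\ne z$ be points of $\mathcal P$ and let $l$ be the line segment joining them. If $z,y\notin\mathcal O$ and $\beta^Ty<\beta^Tz$, then $z\xrightarrow{l}y$.
   Context: $\mathcal B=\operatorname{Im}(B)$, $\mathcal O=\{x:Ax+a\in\mathcal B\}$; $\beta$ is the unit normal to $\mathcal B$ with $\beta^T(Ax+a)\le0$ for all $x\in\mathcal P$. $z\xrightarrow{l}y$ means there exist a piecewise continuous control $u$ and $T\ge0$ such that the solution $\phi^u_t(z)$ satisfies $\phi^u_T(z)=y$ and $\phi^u_t(z)\in l$ for all $t\in[0,T]$. *)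

(* Defs.v *)
From HB Require Import structures.
From mathcomp Require Import all_boot all_order all_algebra.
From mathcomp Require Import all_classical all_reals all_analysis.
Set Implicit Arguments. Unset Strict Implicit. Unset Printing Implicit Defensive.
Import Order.TTheory GRing.Theory Num.Theory.
Import numFieldNormedType.Exports.
Local Open Scope classical_set_scope.
Local Open Scope ring_scope.

Section Defs.
Variable R : realType.

Definition conv_hull (n : nat) (V : seq 'cV[R]_n) : set 'cV[R]_n :=
  [set x | exists lam : 'I_(size V) -> R,
     (forall i, 0 <= lam i) /\ \sum_(i < size V) lam i = 1 /\
     x = \sum_(i < size V) lam i *: V`_i].

Definition is_polytope (n : nat) (P : set 'cV[R]_n) : Prop :=
  exists V : seq 'cV[R]_n, P = conv_hull V.

(* x is an interior point of P (boxes generate the Euclidean topology) *)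
Definition interior_pt (n : nat) (P : set 'cV[R]_n) (x : 'cV[R]_n) : Prop :=
  exists eps : R, 0 < eps /\
    forall w : 'cV[R]_n, (forall i, `|w i 0 - x i 0| < eps) -> P w.

(* P is n-dimensional: it has nonempty interior in R^n *)
Definition full_dim (n : nat) (P : set 'cV[R]_n) : Prop :=
  exists x, interior_pt P x.

Definition controllable (n m : nat) (A : 'M[R]_n) (B : 'M[R]_(n, m)) : Prop :=
  \rank (\mxrow_(k < n) (A ^+ k *m B)) = n.

Definition imB (n m : nat) (B : 'M[R]_(n, m)) : set 'cV[R]_n :=
  [set v | exists w : 'cV[R]_m, v = B *m w].

Definition Oset (n m : nat) (A : 'M[R]_n) (a : 'cV[R]_n) (B : 'M[R]_(n, m))
  : set 'cV[R]_n := [set x | imB B (A *m x + a)].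

Definition segment (n : nat) (z y : 'cV[R]_n) : set 'cV[R]_n :=
  [set x | exists lam : R, 0 <= lam <= 1 /\ x = (1 - lam) *: z + lam *: y].

Definition dotv (n : nat) (u v : 'cV[R]_n) : R := (u^T *m v) 0 0.

(* s is a partition 0 = t_0 < t_1 < ... < t_k = T of [0, T] (t_1..t_k listed) *)
Definition partition_of (T : R) (s : seq R) : Prop :=
  path (fun p q : R => p < q) 0 s /\ last 0 s = T.

(* u is piecewise continuous on [0,T]: on each open piece (t_k, t_{k+1}) it
   coincides with a function continuous on the closed piece [t_k, t_{k+1}]
   (i.e. u is continuous there with finite one-sided limits at the ends). *)
Definition piecewise_continuous (m : nat) (T : R) (u : R -> 'cV[R]_m) : Prop :=
  exists s : seq R, partition_of T s /\
    forall k : nat, (k < size s)%N ->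
      exists g : R -> 'cV[R]_m,
        (forall j, {within `[nth 0 (0 :: s) k, nth 0 s k],
                     continuous (fun t => g t j 0)}) /\
        (forall t, nth 0 (0 :: s) k < t < nth 0 s k -> u t = g t).

(* z -l-> y : there exist a piecewise continuous control u and T >= 0 such
   that the (Caratheodory) solution x = phi^u(z) of x' = A x + a + B u,
   x(0) = z, satisfies x(T) = y and x(t) in l for all t in [0,T].
   The solution is continuous on [0,T] and satisfies the ODE at every
   t in (0,T) outside a finite set (the discontinuities of u). *)
Definition reach_within (n m : nat) (A : 'M[R]_n) (a : 'cV[R]_n)
  (B : 'M[R]_(n, m)) (l : set 'cV[R]_n) (z y : 'cV[R]_n) : Prop :=
  exists (u : R -> 'cV[R]_m) (T : R), 0 <= T /\ piecewise_continuous T u /\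
  exists (x : R -> 'cV[R]_n) (F : seq R),
    x 0 = z /\ x T = y /\
    (forall t, 0 <= t <= T -> l (x t)) /\
    (forall j, {within `[0, T], continuous (fun t => x t j 0)}) /\
    (forall t, 0 < t < T -> t \notin F ->
       forall j, is_derive t 1 (fun s => x s j 0) ((A *m x t + a + B *m u t) j 0)).

End Defs.

(* Main.v *)
Require Import Defs.
From HB Require Import structures.
From mathcomp Require Import all_boot all_order all_algebra.
From mathcomp Require Import all_classical all_reals all_analysis.
From mathcomp Require Import ring lra.
Import Order.TTheory GRing.Theory Num.Theory.
Local Open Scope classical_set_scope.
Local Open Scope ring_scope.
Lemma imB_hyper (R : realType) (n m : nat) (B : 'M[R]_(n, m)) (beta : 'cV[R]_n) :
  beta != 0 -> beta^T *m B = 0 -> \rank B = n.-1 ->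
  forall v, dotv beta v = 0 -> exists w, v = B *m w.
Proof.
move=> bn0 hBb hr v hv.
have hsub : (B^T <= kermx beta)%MS.
  by apply/sub_kermxP; rewrite -[B^T *m beta]trmxK trmx_mul trmxK hBb trmx0.
have rb : \rank beta = 1%N.
  apply/eqP; rewrite eqn_leq rank_leq_col lt0n mxrank_eq0 bn0 //.
have hrk : \rank (kermx beta) = \rank B^T by rewrite mxrank_ker rb mxrank_tr hr subn1.
have heq : (B^T == kermx beta)%MS.
  by rewrite -(mxrank_leqif_eq hsub) hrk.
have hv' : (v^T <= kermx beta)%MS.
  apply/sub_kermxP; apply/matrixP => i j; rewrite !ord1 !mxE.
  rewrite -[RHS]hv /dotv mxE; apply: eq_bigr => k _; rewrite !mxE mulrC //.
have : (v^T <= B^T)%MS by rewrite (eqmxP heq).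
case/submxP => D hD.
exists D^T; by rewrite -[v]trmxK hD trmx_mul trmxK.
Qed.


Lemma ode_sol (R : realType) (c0 c1 : R) : 0 < c0 -> 0 < c0 + c1 ->
  exists (T : R) (s : R -> R), 0 < T /\ s 0 = 0 /\ s T = 1 /\
   (forall t, 0 <= t <= T -> 0 <= s t <= 1) /\
   (forall t : R, is_derive t 1 s (c0 + c1 * s t)).
Proof.
move=> c0p c01p.
have c0n0 : c0 != 0 by rewrite gt_eqF.
have dlin : forall (k t : R), is_derive t 1 (fun t : R => k * t) k.
  move=> k t; have := is_deriveZ k (is_derive_id t (1:R)).
  by rewrite /GRing.scale /= mulr1.
have [c10|c1n0] := eqVneq c1 0.
  exists c0^-1, (fun t => c0 * t); split; first by rewrite invr_gt0.
  split; first by rewrite mulr0.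
  split; first by rewrite mulfV // gt_eqF.
  split.
    move=> t /andP[t0 tT]; rewrite mulr_ge0 ?(ltW c0p) //=.
    by rewrite -(mulfV c0n0) ler_pM2l.
  by move=> t; rewrite c10 mul0r addr0; apply: dlin.
pose s := fun t : R => c0 / c1 * (expR (c1 * t) - 1).
have pos : 0 < 1 + c1 / c0.
  by rewrite -(mulfV c0n0) -mulrDl divr_gt0.
exists (ln (1 + c1 / c0) / c1), s.
have sT : s (ln (1 + c1 / c0) / c1) = 1.
  rewrite /s [c1 * (_ / _)]mulrC divfK // lnK ?posrE // addrAC subrr add0r.
  by rewrite mulrA divfK // divff.
have mono : forall a b, a <= b -> s a <= s b.
  move=> a b ab; rewrite /s.
  have [c1m|c1p|c1e] := ltgtP c1 0; last by move/eqP: c1n0.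
  - have k : c0 / c1 < 0 by rewrite pmulr_rlt0 // invr_lt0.
    by rewrite ler_nM2l // lerD2r ler_expR ler_nM2l.
  - have k : 0 < c0 / c1 by rewrite divr_gt0.
    by rewrite ler_pM2l // lerD2r ler_expR ler_pM2l.
have s0 : s 0 = 0 by rewrite /s mulr0 expR0 subrr mulr0.
have Tpos : 0 < ln (1 + c1 / c0) / c1.
  have [c1m|c1p|c1e] := ltgtP c1 0; last by move/eqP: c1n0.
  - rewrite -divrNN divr_gt0 // oppr_gt0 ?oppr_gt0 //; apply: ln_lt0.
    by rewrite pos /= gtrDl pmulr_llt0 ?invr_gt0.
  - by rewrite divr_gt0 // ln_gt0 // ltrDl divr_gt0.
split => //; split => //; split => //; split.
  move=> t /andP[t0 tT]; apply/andP; split; [rewrite -s0; exact: mono | rewrite -sT; exact: mono].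
move=> t.
have dE : is_derive t 1 (expR \o (fun t => c1 * t)) (expR (c1*t) * c1).
  exact: is_derive1_comp (is_derive_expR _) (dlin c1 t).
have := is_deriveZ (c0 / c1) (is_deriveB dE (is_derive_cst (1:R) t 1)).
rewrite subr0 => h.
apply: (is_derive_eq (near_eq_is_derive _ h)).
  by apply: filterE => x.
rewrite /s /GRing.scale /=; field.
exact: c1n0.
Qed.

Lemma deriv_aff (R : realType) (k : nat) (p q : 'cV[R]_k) (sg ds : R -> R) :
  (forall t : R, is_derive t 1 sg (ds t)) ->
  forall j (t : R), is_derive t 1 (fun s => (p + sg s *: q) j 0) (ds t * q j 0).
Proof.
move=> hs j t.
have h := is_deriveD (is_derive_cst (p j 0) t 1) (is_deriveZ (q j 0) (hs t)).
apply: (is_derive_eq (near_eq_is_derive _ h)).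
  by apply: filterE => x; rewrite !mxE /GRing.scale /= mulrC.
by rewrite add0r /GRing.scale /= mulrC.
Qed.

Lemma dotvD (R : realType) (n : nat) (b u v : 'cV[R]_n) :
  dotv b (u + v) = dotv b u + dotv b v.
Proof. by rewrite /dotv mulmxDr mxE. Qed.

Lemma dotvZ (R : realType) (n : nat) (b v : 'cV[R]_n) (k : R) :
  dotv b (k *: v) = k * dotv b v.
Proof. by rewrite /dotv -scalemxAr mxE. Qed.

Lemma dotvN (R : realType) (n : nat) (b v : 'cV[R]_n) :
  dotv b (- v) = - dotv b v.
Proof. by rewrite -scaleN1r dotvZ mulN1r. Qed.

Arguments imB_hyper {R n m B beta}.
Arguments ode_sol {R c0 c1}.
Arguments deriv_aff {R k}.
Arguments dotvD {R n}.
Arguments dotvZ {R n}.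
Arguments dotvN {R n}.

Theorem lemma5 (R : realType) (n m : nat) (P : set 'cV[R]_n)
  (A : 'M[R]_n) (a : 'cV[R]_n) (B : 'M[R]_(n, m)) (beta : 'cV[R]_n)
  (hP : is_polytope P) (hPdim : full_dim P)
  (hrank : \rank B = n.-1) (hctrb : controllable A B)
  (hint : forall x, interior_pt P x -> ~ Oset A a B x)
  (hbeta_unit : dotv beta beta = 1)
  (hbeta_normal : beta^T *m B = 0)
  (hbeta_sign : forall x, P x -> dotv beta (A *m x + a) <= 0)
  (z y : 'cV[R]_n) (hz : P z) (hy : P y) (hzy : y <> z)
  (hzO : ~ Oset A a B z) (hyO : ~ Oset A a B y)
  (hbyz : dotv beta y < dotv beta z) :
  reach_within A a B (segment z y) z y.
Proof.
have bn0 : beta != 0.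
  apply/eqP => b0; move: hbeta_unit; rewrite b0 /dotv mxE big1 => [|i _].
    by move/eqP; rewrite eq_sym oner_eq0.
  by rewrite !mxE mul0r.
have hyp := imB_hyper bn0 hbeta_normal hrank.
have gneg : forall x, P x -> ~ Oset A a B x -> dotv beta (A *m x + a) < 0.
  move=> x Px nO; rewrite lt_neqAle hbeta_sign // andbT.
  by apply/eqP => /hyp [w hw]; apply: nO; exists w.
pose d := y - z.
pose del := dotv beta d.
have delneg : del < 0 by rewrite /del /d dotvD dotvN subr_lt0.
have deln0 : del != 0 by rewrite lt_eqF.
pose g0 := dotv beta (A *m z + a).
pose g1 := dotv beta (A *m d).
have g0n : g0 < 0 by apply: gneg.
have gyn : g0 + g1 < 0.
  have -> : g0 + g1 = dotv beta (A *m y + a).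
    rewrite /g0 /g1 -dotvD /d mulmxBr; congr (dotv _ _).
    by move: (A *m y) (A *m z) => Ay Az; apply/matrixP => i j; rewrite !mxE; ring.
  by apply: gneg.
pose c0 := g0 / del.
pose c1 := g1 / del.
have c0p : 0 < c0 by rewrite /c0 ltr_ndivlMr // mul0r.
have c01p : 0 < c0 + c1 by rewrite /c0 /c1 -mulrDl ltr_ndivlMr // mul0r.
have [T [sg [Tp [s0 [sT [sb sd]]]]]] := ode_sol c0p c01p.
have [w0 hw0] : exists w0, c0 *: d - (A *m z + a) = B *m w0.
  apply: hyp; rewrite dotvD dotvN dotvZ -/del -/g0 /c0 divfK // subrr //.
have [w1 hw1] : exists w1, c1 *: d - A *m d = B *m w1.
  apply: hyp; rewrite dotvD dotvN dotvZ -/del -/g1 /c1 divfK // subrr //.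
pose u := fun t => w0 + sg t *: w1.
pose x := fun t => z + sg t *: d.
have du := deriv_aff w0 w1 sg _ sd.
have dx := deriv_aff z d sg _ sd.
exists u, T; split; first exact: ltW.
split.
  exists [:: T]; split; first by rewrite /partition_of /= Tp.
  case=> [|k] //= _; exists u; split => // j.
  apply: derivable_within_continuous => t _.
 exact: (@ex_derive _ _ _ _ _ _ _ (du j t)).
exists x, [::]; split; first by rewrite /x s0 scale0r addr0.
split; first by rewrite /x sT scale1r /d addrC subrK.
split.
  move=> t /sb hs; exists (sg t); split => //.
  by rewrite /x /d; apply/matrixP => i j; rewrite !mxE; ring.
split.
  move=> j; apply: derivable_within_continuous => t _; exact: (@ex_derive _ _ _ _ _ _ _ (dx j t)).
move=> t _ _ j.
have -> : A *m x t + a + B *m u t = (c0 + c1 * sg t) *: d.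
  rewrite /x /u mulmxDr mulmxDr -!scalemxAr -hw0 -hw1.
  move: (A *m d) (A *m z) => Ad Az.
  by apply/matrixP => i k; rewrite !mxE; ring.
by rewrite mxE.
Qed.
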